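(* Let $n \geq 3$ be an integer and let $\ell$ be an odd positive integer. Then $B_n[\ell]/B_n[4\ell] \cong B_n/B_n[4]$.
   Context: $B_n$ denotes the braid group on $n$ strands with standard Artin generators $\sigma_1,\dots,\sigma_{n-1}$. The reduced integral Burau representation $\rho_{-1}: B_n \to GL(n-1,\mathbb{Z})$ is defined on generators by $\rho_{-1}(\sigma_1)=\begin{pmatrix}1&0\\1&1\end{pmatrix}\oplus \mathrm{Id}_{n-3}$, $\rho_{-1}(\sigma_{n-1})=\mathrm{Id}_{n-3}\oplus\begin{pmatrix}1&-1\\0&1\end{pmatrix}$, and for $1<i<n-1$, $\rho_{-1}(\sigma_i)=\mathrm{Id}_{i-2}\oplus\begin{pmatrix}1&-1&0\\0&1&0\\0&1&1\end{pmatrix}\oplus \mathrm{Id}_{n-i-2}$, where $\oplus$ denotes block-diagonal sum. For a positive integer $\ell$, let $r_\ell: GL(n-1,\mathbb{Z})\to GL(n-1,\mathbb{Z}/\ell\mathbb{Z})$ be entrywise reduction mod $\ell$. The level $\ell$ congruence subgroup of the braid group is $B_n[\ell] := \ker(r_\ell\circ\rho_{-1})$. *)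

(* Defs.v *)
From HB Require Import structures.
From mathcomp Require Import all_boot all_order all_algebra.
Set Implicit Arguments. Unset Strict Implicit. Unset Printing Implicit Defensive.
Import Order.TTheory GRing.Theory Num.Theory.
Local Open Scope ring_scope.

(* A word in the Artin generators of B_n: a letter (i, false) is sigma_(i+1),
   a letter (i, true) is sigma_(i+1)^-1, for i : 'I_(n-1) (0-indexed). *)
Definition bword (n : nat) := seq ('I_(n.-1) * bool).

Definition winv (n : nat) (w : bword n) : bword n :=
  rev (map (fun p => (p.1, ~~ p.2)) w).

(* This is exactly the paper's block description (the 2x2 blocks for
   sigma_1 and sigma_(n-1) are the truncations of the 3x3 block). *)
Definition rho_sigma (n : nat) (j : 'I_(n.-1)) : 'M[int]_(n.-1) :=
  \matrix_(a < n.-1, b < n.-1)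
    ((a == b)%:R - ((a.+1 == j :> nat) && (b == j))%:R + ((a == j.+1 :> nat) && (b == j))%:R).

(* rho_{-1}(sigma_(j+1)^-1) : since N = rho(sigma) - 1 satisfies N^2 = 0,
   the inverse is 1 - N. *)
Definition rho_sigma_inv (n : nat) (j : 'I_(n.-1)) : 'M[int]_(n.-1) :=
  \matrix_(a < n.-1, b < n.-1)
    ((a == b)%:R + ((a.+1 == j :> nat) && (b == j))%:R - ((a == j.+1 :> nat) && (b == j))%:R).

Definition rho_letter (n : nat) (p : 'I_(n.-1) * bool) : 'M[int]_(n.-1) :=
  if p.2 then rho_sigma_inv p.1 else rho_sigma p.1.

Definition rho (n : nat) (w : bword n) : 'M[int]_(n.-1) :=
  \prod_(p <- w) rho_letter p.

Definition mx_congr (n : nat) (m : nat) (A B : 'M[int]_n) : Prop :=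
  forall i j, (A i j == B i j %[mod m%:Z])%Z.

(* The braid represented by w lies in B_n[m] = ker (r_m o rho_{-1}). *)
Definition in_Bcong (n m : nat) (w : bword n) : Prop :=
  mx_congr m (rho w) 1%:M.

(* Main.v *)
Require Import Defs.
From mathcomp Require Import all_boot all_order all_algebra.
From mathcomp Require Import ring.
Set Implicit Arguments. Unset Strict Implicit. Unset Printing Implicit Defensive.
Import Order.TTheory GRing.Theory Num.Theory.
Local Open Scope ring_scope.

Definition dv (k : nat) (m : int) (M : 'M[int]_k) := forall i j, (m %| M i j)%Z.

Lemma dvD k m (A B : 'M[int]_k) : dv m A -> dv m B -> dv m (A + B).
Proof. by move=> hA hB i j; rewrite mxE rpredD. Qed.
Lemma dvN k m (A : 'M[int]_k) : dv m A -> dv m (- A).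
Proof. by move=> hA i j; rewrite mxE rpredN. Qed.
Lemma dvB k m (A B : 'M[int]_k) : dv m A -> dv m B -> dv m (A - B).
Proof. by move=> hA hB; apply: dvD => //; apply: dvN. Qed.
Lemma dvMl k m (A B : 'M[int]_k) : dv m B -> dv m (A * B).
Proof. move=> hB i j; rewrite -mulmxE mxE rpred_sum // => x _; exact: dvdz_mull. Qed.
Lemma dvMr k m (A B : 'M[int]_k) : dv m A -> dv m (A * B).
Proof. move=> hA i j; rewrite -mulmxE mxE rpred_sum // => x _; exact: dvdz_mulr. Qed.
Lemma dvMn k m (A : 'M[int]_k) c : (m %| c%:Z)%Z -> dv m (A *+ c).
Proof. move=> h i j. rewrite mulmxnE -mulr_natr; apply: dvdz_mull; by rewrite natz. Qed.

Lemma congrE k (m : nat) (A : 'M[int]_k) : mx_congr m A 1%:M <-> dv m%:Z (A - 1).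
Proof.
split=> h i j; move: (h i j); rewrite !mxE eqz_mod_dvd //.
Qed.

Definition Nm n (j : 'I_(n.-1)) : 'M[int]_(n.-1) :=
  \matrix_(a < n.-1, b < n.-1)
    (((a == j.+1 :> nat) && (b == j))%:R - ((a.+1 == j :> nat) && (b == j))%:R).

Lemma rho_sigmaE n j : rho_sigma j = 1 + Nm (n:=n) j.
Proof. apply/matrixP=> a b; rewrite !mxE; ring. Qed.
Lemma rho_sigma_invE n j : rho_sigma_inv j = 1 - Nm (n:=n) j.
Proof. apply/matrixP=> a b; rewrite !mxE; ring. Qed.

Lemma Nm2 n j : Nm (n:=n) j * Nm j = 0.
Proof.
apply/matrixP=> a b; rewrite -mulmxE !mxE big1 // => k _; rewrite !mxE.
case: (eqVneq k j) => [->|h].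
  by rewrite (gtn_eqF (ltnSn j)) (ltn_eqF (ltnSn j)) !andFb subrr mulr0.
by rewrite !andbF subrr mul0r.
Qed.

Definition Np n (p : 'I_(n.-1) * bool) : 'M[int]_(n.-1) := rho_letter p - 1.

Lemma letterE n (p : 'I_(n.-1) * bool) : rho_letter p = 1 + Np p.
Proof. by rewrite /Np addrC subrK. Qed.

Lemma Np2 n (p : 'I_(n.-1) * bool) : Np p * Np p = 0.
Proof.
rewrite /Np /rho_letter; case: p.2.
  by rewrite rho_sigma_invE addrC addKr mulrN mulNr opprK Nm2.
by rewrite rho_sigmaE addrC addKr Nm2.
Qed.

Lemma letter_inv n (p : 'I_(n.-1) * bool) :
  rho_letter (p.1, ~~ p.2) * rho_letter p = 1.
Proof.
have -> : rho_letter (p.1, ~~ p.2) = 1 - Np p.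
  have e1 : forall X : 'M[int]_(n.-1), 1 + X - 1 = X by move=> X; rewrite addrAC subrr add0r.
  have e2 : forall X : 'M[int]_(n.-1), 1 - X - 1 = - X by move=> X; rewrite e1.
  rewrite /Np /rho_letter /=; case: p.2 => /=.
    by rewrite rho_sigma_invE rho_sigmaE e2 opprK.
  by rewrite rho_sigmaE rho_sigma_invE e1.
by rewrite letterE mulrDr mulr1 mulrBl mul1r Np2 subr0 subrK.
Qed.

Lemma letter_exp n (p : 'I_(n.-1) * bool) k :
  rho_letter p ^+ k = 1 + Np p *+ k.
Proof.
elim: k => [|k IH]; first by rewrite expr0 mulr0n addr0.
by rewrite exprSr IH letterE mulrDr mulr1 mulrDl mul1r mulrnAl Np2 mul0rn addr0 -addrA -mulrSr.
Qed.

Lemma rho_cat n (a b : bword n) : rho (a ++ b) = rho a * rho b.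
Proof. by rewrite /rho big_cat. Qed.

Lemma rho_cons n p (a : bword n) : rho (p :: a) = rho_letter p * rho a.
Proof. by rewrite /rho big_cons. Qed.

Lemma rho_nil n : rho ([::] : bword n) = 1.
Proof. by rewrite /rho big_nil. Qed.

Lemma rho_winv n (w : bword n) : rho (winv w) * rho w = 1.
Proof.
elim: w => [|p w IH]; first by rewrite /winv /= rho_nil mulr1.
rewrite /winv /= rev_cons -cats1 rho_cat rho_cons -/(winv w).
rewrite /rho big_cons big_nil mulr1 -/(rho (winv w)) -mulrA (mulrA (rho_letter _)).
by rewrite letter_inv mul1r IH.
Qed.

Lemma dv_inv k m (A B : 'M[int]_k) : A * B = 1 -> dv m (B - 1) -> dv m (A - 1).
Proof.
move=> AB hB.
have -> : A - 1 = - (A * (B - 1)) by rewrite mulrBr mulr1 AB opprB.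
by apply: dvN; apply: dvMl.
Qed.

Lemma dv_mul1 k m (A B : 'M[int]_k) : dv m (A - 1) -> dv m (B - 1) -> dv m (A * B - 1).
Proof.
move=> hA hB.
have -> : A * B - 1 = A * (B - 1) + (A - 1) by rewrite mulrBr mulr1 addrA subrK.
by apply: dvD => //; apply: dvMl.
Qed.

Lemma inB_winv_cat n m (w w' : bword n) :
  in_Bcong m w -> in_Bcong m w' -> in_Bcong m (winv w ++ w').
Proof.
rewrite /in_Bcong !congrE rho_cat => hw hw'.
by apply: dv_mul1 => //; apply: dv_inv (rho_winv w) hw.
Qed.

Lemma crt n l (w : bword n) : odd l -> in_Bcong l w ->
  (in_Bcong (4 * l)%N w <-> in_Bcong 4 w).
Proof.
move=> hl.
have co : coprimez 4 l.
  by rewrite coprimezE /=; change (coprime (2 ^ 2) l); rewrite coprime_pexpl // coprime2n.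
rewrite /in_Bcong !congrE => h; split=> H i j.
  by have := H i j; rewrite PoszM Gauss_dvdz //; case/andP.
have e : Posz (4 * l)%N = 4%:Z * l%:Z by rewrite PoszM.
by rewrite e Gauss_dvdz ?H ?h.
Qed.

From mathcomp Require Import zify.

Lemma rho_nseq n k (p : 'I_(n.-1) * bool) : rho (nseq k p) = rho_letter p ^+ k.
Proof.
elim: k => [|k IH]; first by rewrite rho_nil expr0.
by rewrite /= rho_cons IH exprS.
Qed.

Lemma dv0 k m : dv m (0 : 'M[int]_k).
Proof. by move=> i j; rewrite mxE dvdz0. Qed.

Lemma four_div l : odd l -> (4 %| (l * l).-1)%N.
Proof.
move=> hl; rewrite -(odd_double_half l) hl.
set a := l./2; rewrite -!muln2.
have -> : ((1 + a * 2) * (1 + a * 2)).-1 = 4 * (a * a + a) by lia.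
by rewrite dvdn_mulr.
Qed.

Lemma main (n l : nat) (hn : (3 <= n)%N) (hl0 : (0 < l)%N) (hlodd : odd l) :
  exists f : bword n -> bword n,
    [/\ (forall w w' : bword n, in_Bcong l w -> in_Bcong l w' ->
           (in_Bcong (4 * l)%N (winv w ++ w') <-> in_Bcong 4 (winv (f w) ++ f w'))),
        (forall w w' : bword n, in_Bcong l w -> in_Bcong l w' ->
           in_Bcong 4 (winv (f (w ++ w')) ++ (f w ++ f w')))
      & (forall v : bword n, exists2 w : bword n, in_Bcong l w &
           in_Bcong 4 (winv (f w) ++ v))].
Proof.
exists id; split.
- move=> w w' hw hw'; apply: crt => //; exact: inB_winv_cat.
- move=> w w' _ _; rewrite /in_Bcong congrE rho_cat rho_winv subrr; exact: dv0.
pose k := (l * l)%N.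
have Hl : forall v : bword n, dv l%:Z (rho (flatten [seq nseq k p | p <- v]) - 1).
  elim => [|p v IH] /=; first by rewrite rho_nil subrr; exact: dv0.
  rewrite rho_cat; apply: dv_mul1 => //.
  rewrite rho_nseq letter_exp addrAC subrr add0r; apply: dvMn.
  by rewrite /k PoszM dvdz_mulr.
have H4 : forall v : bword n, dv 4 (rho v - rho (flatten [seq nseq k p | p <- v])).
  elim => [|p v IH] /=; first by rewrite subrr; exact: dv0.
  rewrite rho_cat rho_cons rho_nseq.
  have -> : rho_letter p * rho v - rho_letter p ^+ k * rho (flatten [seq nseq k p0 | p0 <- v])
     = rho_letter p * (rho v - rho (flatten [seq nseq k p0 | p0 <- v]))
       - (rho_letter p ^+ k - rho_letter p) * rho (flatten [seq nseq k p0 | p0 <- v]).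
    by rewrite mulrBr mulrBl opprB addrA subrK.
  apply: dvB; first exact: dvMl.
  apply: dvMr.
  have kS : k = (k.-1).+1 by rewrite prednK // muln_gt0 hl0.
  have -> : rho_letter p ^+ k - rho_letter p = Np p *+ k.-1.
    rewrite letter_exp letterE {1}kS mulrSr (addrC (Np p *+ _)).
    by apply/eqP; rewrite subr_eq [X in _ == X]addrCA [Np p *+ _ + _]addrC.
  apply: dvMn; rewrite dvdzE /=; exact: four_div.
move=> v; pose w := flatten [seq nseq k p | p <- v].
have H4v := H4 v.
exists w; first by rewrite /in_Bcong congrE; apply: Hl.
rewrite /in_Bcong congrE rho_cat /=.
have -> : rho (winv w) * rho v - 1 = rho (winv w) * (rho v - rho w).
  by rewrite mulrBr rho_winv.
exact: dvMl.
Qed.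

Local Close Scope ring_scope.
Unset Implicit Arguments.

Theorem theorem3p3 (n l : nat) (hn : 3 <= n) (hl0 : 0 < l) (hlodd : odd l) :
  exists f : bword n -> bword n,
    [/\ (forall w w' : bword n, in_Bcong l w -> in_Bcong l w' ->
           (in_Bcong (4 * l) (winv w ++ w') <-> in_Bcong 4 (winv (f w) ++ f w'))),
        (forall w w' : bword n, in_Bcong l w -> in_Bcong l w' ->
           in_Bcong 4 (winv (f (w ++ w')) ++ (f w ++ f w')))
      & (forall v : bword n, exists2 w : bword n, in_Bcong l w &
           in_Bcong 4 (winv (f w) ++ v))].
Proof. exact: main. Qed.
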